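(* Let $m\ge1$, $n\in\mathbb{Z}$, and let $B=(b_0,\ldots,b_{m-1})$ and $T=(t_0,\ldots,t_{m-1})$ be sequences of integers with $\sum_i b_i\le n$ and $\sum_i t_i=n-m+1$. Then for every $l\in\{1,\ldots,m\}$ there exists $i\in\{0,\ldots,m-1\}$ such that for every $l'\in\{1,\ldots,l\}$, $$\sum_{j=i}^{i+l'-1}b_j\le l'-1+\sum_{j=i}^{i+l'-1}t_j.$$
   Context: Indices of $B$ and $T$ are taken modulo $m$ (ring arrangement); $\sum_{j=i}^{i+l'-1}b_j$ is the sum of the chain of $l'$ consecutive boxes starting at $b_i$. *)

(* Defs.v *)
From mathcomp Require Import all_boot all_order all_algebra.
Set Implicit Arguments. Unset Strict Implicit. Unset Printing Implicit Defensive.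
Import Order.TTheory GRing.Theory Num.Theory.
Local Open Scope ring_scope.

(* Sequences B = (b_0,...,b_{m-1}) are encoded as functions nat -> int, of which
   only the values at 0..m-1 matter; ring indexing: b_j := b (j %% m). *)
Definition chain_sum (m : nat) (b : nat -> int) (i l : nat) : int :=
  \sum_(i <= j < i + l) b (j %% m)%N.

(* Main.v *)
Require Import Defs.
From mathcomp Require Import all_boot all_order all_algebra.
From mathcomp Require Import zify ring lra.
Import Order.TTheory GRing.Theory Num.Theory.
Local Open Scope ring_scope.

Lemma last_min (f : nat -> int) (m : nat) : (1 <= m)%N ->
  exists i, [/\ (i < m)%N, (forall k, (k < m)%N -> f i <= f k) &
     (forall k, (i < k)%N -> (k < m)%N -> f i < f k)].
Proof.
elim: m => [//|m IH] _.
case: m IH => [_|m IH].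
  exists 0%N; split=> //; by case.
have [i [im imin ilast]] := IH isT.
case: (lerP (f m.+1) (f i)) => H.
- exists m.+1; split => //.
  + move=> k; rewrite ltnS leq_eqVlt => /orP [/eqP -> //|km].
    exact: le_trans H (imin _ km).
  + move=> k h1 h2; rewrite ltnS in h2; by rewrite leqNgt h1 in h2.
- exists i; split; first by apply: ltn_trans im _.
  + move=> k; rewrite ltnS leq_eqVlt => /orP [/eqP -> |km]; last exact: imin.
    exact: ltW.
  + move=> k h1; rewrite ltnS leq_eqVlt => /orP [/eqP -> //|km]; exact: ilast.
Qed.

Theorem mainTheorem6 (m : nat) (n : int) (b t : nat -> int) :
  (1 <= m)%N ->
  \sum_(0 <= i < m) b i <= n ->
  \sum_(0 <= i < m) t i = n - m%:Z + 1 ->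
  forall l : nat, (1 <= l <= m)%N ->
  exists i : nat, (i < m)%N /\
    forall l' : nat, (1 <= l' <= l)%N ->
      chain_sum m b i l' <= (l'%:Z - 1) + chain_sum m t i l'.
Proof.
move=> m1 hb ht l /andP [l1 lm].
pose c j := t (j %% m)%N - b (j %% m)%N + 1.
pose S k := \sum_(0 <= j < k) c j.
have Sm : 1 <= S m.
  have -> : S m = \sum_(0 <= j < m) t j - \sum_(0 <= j < m) b j + m%:Z.
    rewrite /S big_nat_cond.
    rewrite (eq_bigr (fun j => t j - b j + 1)); last first.
      by move=> j /andP [/andP [_ jm] _]; rewrite /c modn_small.
    rewrite -big_nat_cond !big_split /= sumrN.
    by rewrite sumr_const_nat subn0 natz.
  rewrite ht; lra.
have Sper : forall k, S (k + m)%N = S k + S m.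
  elim=> [|k IHk].
    have -> : S 0%N = 0 by rewrite /S big_geq.
    by rewrite add0n add0r.
  have E1 : S (k + m).+1 = S (k + m)%N + c (k + m)%N by rewrite /S big_nat_recr.
  have E2 : S k.+1 = S k + c k by rewrite /S big_nat_recr.
  have E3 : c (k + m)%N = c k by rewrite /c modnDr.
  rewrite addSn E1 E2 IHk E3; ring.
have [i [im imin ilast]] := @last_min S m m1.
exists i; split => // l' /andP [l'1 l'l].
have key : chain_sum m t i l' - chain_sum m b i l' + l'%:Z = S (i + l')%N - S i.
  have -> : S (i + l')%N = S i + \sum_(i <= j < i + l') c j.
    by rewrite /S (big_cat_nat (n:=i)) //= ?leq_addr.
  rewrite [S i + _]addrC addrK.
  rewrite /chain_sum /c !big_split /= sumrN; congr (_ + _).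
  by rewrite sumr_const_nat addnC addnK natz.
suff : S i + 1 <= S (i + l')%N by move: key; lra.
case: (ltnP (i + l') m) => hk.
  by rewrite lezD1; apply: ilast => //; rewrite -addn1 leq_add2l.
have -> : (i + l' = (i + l' - m) + m)%N by rewrite subnK.
rewrite Sper; apply: lerD; last done.
apply: imin; rewrite ltn_subLR //.
have : (l' <= m)%N by apply: leq_trans lm.
lia.
Qed.
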